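(* Let $3 \leq s \leq t$ be integers. Let $G$ be a graph and $V(G) = A \cup B$ a partition of its vertex set. If $G[A]$ is $K_{2,2}$-free, $G[B]$ is $K_{2,2}$-free, and $G(A,B)$ is $K_{s,t}$-free, then $G$ is $K_{s+1,t+1}$-free.
   Context: $G[A]$ is the subgraph induced by $A$; $G(A,B)$ is the spanning subgraph of $G$ whose edges are those of $G$ with one endpoint in $A$ and the other in $B$. A graph is $F$-free if it has no subgraph isomorphic to $F$. *)

(* Defs.v *)
From mathcomp Require Import all_boot.
Set Implicit Arguments. Unset Strict Implicit. Unset Printing Implicit Defensive.

Definition simple_graph (V : finType) (e : rel V) : Prop :=
  symmetric e /\ irreflexive e.

Definition has_Kst (V : finType) (e : rel V) (s t : nat) : Prop :=
  exists X Y : {set V},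
    [/\ [disjoint X & Y], #|X| = s, #|Y| = t &
        forall x y, x \in X -> y \in Y -> e x y].

Definition Kst_free (V : finType) (e : rel V) (s t : nat) : Prop :=
  ~ has_Kst e s t.

Definition induced {V : finType} (e : rel V) (A : {set V}) : rel {x : V | x \in A} :=
  fun x y => e (val x) (val y).

Definition cross (V : finType) (e : rel V) (A B : {set V}) : rel V :=
  fun x y => e x y && (((x \in A) && (y \in B)) || ((x \in B) && (y \in A))).
Arguments induced {V} e A _ _.

(* Main.v *)
Require Import Defs.
From mathcomp Require Import all_boot.
From mathcomp Require Import zify.
Set Implicit Arguments. Unset Strict Implicit.

Lemma subset_of_size (T : finType) (A : {set T}) k :
  k <= #|A| -> exists B : {set T}, B \subset A /\ #|B| = k.
Proof.
elim: k => [|k IH] hk; first by exists set0; rewrite sub0set cards0.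
have [B [hBA hB]] := IH (ltnW hk).
have : 0 < #|A :\: B| by rewrite -(cardsID B A) (setIidPr hBA) hB in hk; lia.
case/card_gt0P => x; rewrite inE => /andP [hxB hxA].
exists (x |: B); split; first by rewrite subUset sub1set hxA.
by rewrite cardsU1 hxB hB.
Qed.

Lemma has_Kst_ge (V : finType) (e : rel V) s t (X Y : {set V}) :
  [disjoint X & Y] -> s <= #|X| -> t <= #|Y| ->
  (forall x y, x \in X -> y \in Y -> e x y) -> has_Kst e s t.
Proof.
move=> hd hs ht he.
have [X0 [hX0 cX0]] := subset_of_size hs.
have [Y0 [hY0 cY0]] := subset_of_size ht.
exists X0, Y0; split => //.
  by apply: (disjointWl hX0); rewrite disjoint_sym; apply: (disjointWl hY0); rewrite disjoint_sym.
by move=> x y hx hy; apply: he; [apply: (subsetP hX0) | apply: (subsetP hY0)].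
Qed.

Lemma sub_card2 (V : finType) (A X : {set V}) :
  X \subset A -> 1 < #|X| -> 1 < #|[set x : {x : V | x \in A} | val x \in X]|.
Proof.
move=> hXA /card_gt1P [a [b [ha hb hab]]].
apply/card_gt1P.
exists (exist _ a (subsetP hXA a ha)), (exist _ b (subsetP hXA b hb)).
by rewrite !inE /= ha hb; split.
Qed.

Lemma induced_K22 (V : finType) (e : rel V) (A X Y : {set V}) :
  X \subset A -> Y \subset A -> [disjoint X & Y] -> 1 < #|X| -> 1 < #|Y| ->
  (forall x y, x \in X -> y \in Y -> e x y) -> has_Kst (induced e A) 2 2.
Proof.
move=> hX hY hd cX cY he.
apply: (@has_Kst_ge _ _ 2 2 [set x : {x : V | x \in A} | val x \in X]
                           [set x : {x : V | x \in A} | val x \in Y]).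
- rewrite disjoints_subset; apply/subsetP => x; rewrite !inE => hx.
  by rewrite (disjointFr hd hx).
- exact: sub_card2.
- exact: sub_card2.
- by move=> x y; rewrite !inE => hx hy; apply: he.
Qed.

Theorem lemma4p4 (s t : nat) (V : finType) (e : rel V) (A B : {set V}) :
  3 <= s -> s <= t ->
  simple_graph e ->
  [disjoint A & B] -> A :|: B = [set: V] ->
  Kst_free (induced e A) 2 2 ->
  Kst_free (induced e B) 2 2 ->
  Kst_free (cross e A B) s t ->
  Kst_free e s.+1 t.+1.
Proof.
move=> hs hst [esym eirr] hAB hU fA fB fC [X [Y [hXY cX cY he]]].
have inB : forall x, x \notin A -> x \in B.
  move=> x hx; have : x \in A :|: B by rewrite hU inE.
  by rewrite inE (negbTE hx).
have sXB : X :\: A \subset B by apply/subsetP => x; rewrite inE => /andP [h _]; exact: inB.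
have sYB : Y :\: A \subset B by apply/subsetP => x; rewrite inE => /andP [h _]; exact: inB.
have dXYA : [disjoint X :&: A & Y :&: A].
  by apply: (disjointWl (subsetIl _ _)); rewrite disjoint_sym; apply: (disjointWl (subsetIl _ _)); rewrite disjoint_sym.
have dXYB : [disjoint X :\: A & Y :\: A].
  by apply: (disjointWl (subsetDl _ _)); rewrite disjoint_sym; apply: (disjointWl (subsetDl _ _)); rewrite disjoint_sym.
have K1 : 1 < #|X :&: A| -> 1 < #|Y :&: A| -> False.
  move=> h1 h2; apply: fA; apply: (induced_K22 (subsetIr _ _) (subsetIr _ _) dXYA h1 h2).
  by move=> x y; rewrite !inE => /andP [hx _] /andP [hy _]; apply: he.
have K2 : 1 < #|X :\: A| -> 1 < #|Y :\: A| -> False.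
  move=> h1 h2; apply: fB; apply: (induced_K22 sXB sYB dXYB h1 h2).
  by move=> x y; rewrite !inE => /andP [_ hx] /andP [_ hy]; apply: he.
have C1 : s <= #|X :&: A| -> t <= #|Y :\: A| -> False.
  move=> h1 h2; apply: fC; apply: (has_Kst_ge _ h1 h2).
    by apply: (disjointWl (subsetIr _ _)); rewrite disjoint_sym; apply: (disjointWl sYB); rewrite disjoint_sym.
  move=> x y hx hy; rewrite /cross; have := hx; rewrite !inE => /andP [hxX hxA].
  have := hy; rewrite !inE => /andP [hyA hyY].
  by rewrite he // hxA (subsetP sYB y hy).
have C2 : s <= #|X :\: A| -> t <= #|Y :&: A| -> False.
  move=> h1 h2; apply: fC; apply: (has_Kst_ge _ h1 h2).
    by apply: (disjointWl sXB); rewrite disjoint_sym; apply: (disjointWl (subsetIr _ _)); rewrite hAB.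
  move=> x y hx hy; rewrite /cross; have := hx; rewrite !inE => /andP [hxA hxX].
  have := hy; rewrite !inE => /andP [hyY hyA].
  by rewrite he // hyA (subsetP sXB x hx) orbT.
have cx := cardsID A X; have cy := cardsID A Y.
rewrite cX cY in cx cy.
clear -hs hst cx cy K1 K2 C1 C2.
have L1 := fun a b => K1 a b; lia.
Qed.
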